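(* Let $M$ be a free $\mathbb{T}$-module with a finite $\mathbb{T}$-basis, $V$ its associated complex vector space, and $(\cdot,\cdot)$ a bicomplex scalar product on $M$ which is hyperbolic positive and closed on $V$. Then for all $\widehat X,\widehat Y\in M$, $$(\widehat X,\widehat Y)=\mathbf{e_1}(\widehat X_{\mathbf{e_1}},\widehat Y_{\mathbf{e_1}})+\mathbf{e_2}(\widehat X_{\mathbf{e_2}},\widehat Y_{\mathbf{e_2}})$$ and $P_k\big((\widehat X,\widehat Y)\big)=(\widehat X_{\mathbf{e_k}},\widehat Y_{\mathbf{e_k}})\in\mathbb{C}(\mathbf{i_1})$ for $k=1,2$.
   Context: Bicomplex numbers: $\mathbb{T}=\{z_1+z_2\mathbf{i_2}: z_1,z_2\in\mathbb{C}(\mathbf{i_1})\}$, $\mathbb{C}(\mathbf{i_1})=\{x+y\mathbf{i_1}: x,y\in\mathbb{R}\}$, $\mathbf{i_1}^2=\mathbf{i_2}^2=-1$, $\mathbf{i_1}\mathbf{i_2}=\mathbf{i_2}\mathbf{i_1}=\mathbf{j}$, $\mathbf{j}^2=1$ (commutative). Hyperbolic numbers $\mathbb{D}=\{x+y\mathbf{j}:x,y\in\mathbb{R}\}$. Idempotents $\mathbf{e_1}=(1+\mathbf{j})/2$, $\mathbf{e_2}=(1-\mathbf{j})/2$. Every $w=z_1+z_2\mathbf{i_2}$ is uniquely $w=(z_1-z_2\mathbf{i_1})\mathbf{e_1}+(z_1+z_2\mathbf{i_1})\mathbf{e_2}$; set $P_1(w)=z_1-z_2\mathbf{i_1}$,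 $P_2(w)=z_1+z_2\mathbf{i_1}$. Conjugation: $(z_1+z_2\mathbf{i_2})^{\dagger_3}=\overline{z_1}-\overline{z_2}\mathbf{i_2}$. $\mathbb{D}^+=\{a\mathbf{e_1}+b\mathbf{e_2}: a,b\ge 0\}$. $M$ has $\mathbb{T}$-basis $\{\widehat m_1,\dots,\widehat m_n\}$, $V=\{\sum x_l\widehat m_l: x_l\in\mathbb{C}(\mathbf{i_1})\}$; for $\widehat X=\sum x_l\widehat m_l$ with $x_l=x_{1l}\mathbf{e_1}+x_{2l}\mathbf{e_2}$, $x_{kl}\in\mathbb{C}(\mathbf{i_1})$, put $\widehat X_{\mathbf{e_k}}=\sum_l x_{kl}\widehat m_l\in V$. A bicomplex scalar product is a map $(\cdot,\cdot):M\times M\to\mathbb{T}$ with: $(\widehat X,\widehat Y_1+\widehat Y_2)=(\widehat X,\widehat Y_1)+(\widehat X,\widehat Y_2)$; $(\widehat X,\alpha\widehat Y)=\alpha(\widehat X,\widehat Y)$ for $\alpha\in\mathbb{T}$; $(\widehat X,\widehat Y)=(\widehat Y,\widehat X)^{\dagger_3}$; $(\widehat X,\widehat X)=0\iff\widehat X=0$. Hyperbolic positive: $(\widehat X,\widehat X)\in\mathbb{D}^+$ for all $\widehat X\in M$. Closed on $V$: $(\widehat X,\widehat Y)\in\mathbb{C}(\mathbf{i_1})$ for all $\widehat X,\widehat Y\in V$. *)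

(* Defs.v *)
From HB Require Import structures.
From mathcomp Require Import all_boot all_order all_algebra.
From mathcomp Require Import complex.
From mathcomp Require Import reals.
Set Implicit Arguments. Unset Strict Implicit. Unset Printing Implicit Defensive.
Import Order.TTheory GRing.Theory Num.Theory.
Local Open Scope ring_scope.
Local Open Scope complex_scope.

Section Bicomplex.
Variable R : realType.
Notation C := (R[i]).

(* w = z1 + z2 i2 with z1, z2 in C(i1) *)
Record bicomplex := BC { bc1 : C ; bc2 : C }.

Definition bc_add (w v : bicomplex) : bicomplex :=
  BC (bc1 w + bc1 v) (bc2 w + bc2 v).
(* (z1 + z2 i2)(w1 + w2 i2) = (z1 w1 - z2 w2) + (z1 w2 + z2 w1) i2 *)
Definition bc_mul (w v : bicomplex) : bicomplex :=
  BC (bc1 w * bc1 v - bc2 w * bc2 v) (bc1 w * bc2 v + bc2 w * bc1 v).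
Definition bc_of (z : C) : bicomplex := BC z 0.
Definition bc0 : bicomplex := bc_of 0.
(* j = i1 i2 *)
Definition bc_j : bicomplex := BC 0 'i.
(* e1 = (1+j)/2, e2 = (1-j)/2 *)
Definition bc_e1 : bicomplex := BC (1/2) ('i / 2).
Definition bc_e2 : bicomplex := BC (1/2) (- ('i / 2)).
Definition bc_conj3 (w : bicomplex) : bicomplex := BC (conjc (bc1 w)) (- conjc (bc2 w)).
Definition P1 (w : bicomplex) : C := bc1 w - bc2 w * 'i.
Definition P2 (w : bicomplex) : C := bc1 w + bc2 w * 'i.
Definition Pk (k : bool) (w : bicomplex) : C := if k then P1 w else P2 w.
Definition ek (k : bool) : bicomplex := if k then bc_e1 else bc_e2.

Definition in_Ci1 (w : bicomplex) : Prop := bc2 w = 0.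
Definition in_Dplus (w : bicomplex) : Prop :=
  exists a b : R, 0 <= a /\ 0 <= b /\
    w = bc_add (bc_mul (bc_of a%:C) bc_e1) (bc_mul (bc_of b%:C) bc_e2).

(* The free T-module M with T-basis m_1..m_n, identified with coordinate
   vectors: X = sum_l x_l m_l  <->  (fun l => x_l). *)
Definition bmod (n : nat) := 'I_n -> bicomplex.
Definition bmod_add n (X Y : bmod n) : bmod n := fun l => bc_add (X l) (Y l).
Definition bmod_scale n (a : bicomplex) (X : bmod n) : bmod n :=
  fun l => bc_mul a (X l).
Definition bmod0 n : bmod n := fun _ => bc0.
Definition in_V n (X : bmod n) : Prop := forall l, in_Ci1 (X l).
(* X_{e_k} = sum_l x_{kl} m_l  where x_l = x_{1l} e1 + x_{2l} e2 *)
Definition ecomp n (k : bool) (X : bmod n) : bmod n := fun l => bc_of (Pk k (X l)).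

Definition bicomplex_scalar_product n (sp : bmod n -> bmod n -> bicomplex) : Prop :=
  [/\ (forall X Y1 Y2, sp X (bmod_add Y1 Y2) = bc_add (sp X Y1) (sp X Y2)),
      (forall X Y a, sp X (bmod_scale a Y) = bc_mul a (sp X Y)),
      (forall X Y, sp X Y = bc_conj3 (sp Y X)) &
      (forall X, sp X X = bc0 <-> X = @bmod0 n)].

Definition hyperbolic_positive n (sp : bmod n -> bmod n -> bicomplex) : Prop :=
  forall X, in_Dplus (sp X X).

Definition closed_on_V n (sp : bmod n -> bmod n -> bicomplex) : Prop :=
  forall X Y, in_V X -> in_V Y -> in_Ci1 (sp X Y).

End Bicomplex.

(* Main.v *)
Require Import Defs.
From HB Require Import structures.
From mathcomp Require Import all_boot all_order all_algebra.
From mathcomp Require Import complex.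
From mathcomp Require Import reals.
From mathcomp Require Import ring.
From Stdlib Require Import FunctionalExtensionality.
Import Order.TTheory GRing.Theory Num.Theory.
Local Open Scope ring_scope.

Section S.
Local Open Scope complex_scope.
Variable R : realType.
Lemma two_nz : (2 : R[i]) != 0. Proof. by rewrite pnatr_eq0. Qed.
Lemma h2 : (2 : R[i]) * 2^-1 = 1. Proof. by rewrite mulfV // two_nz. Qed.
Lemma hi : ('i : R[i]) * 'i = -1. Proof. by rewrite -expr2 sqr_i. Qed.
Ltac bring := move: hi; move: ('i : R[i]); intros j hj; field: hj; try done.
Lemma bc1E (a b : R[i]) : bc1 (BC a b) = a. Proof. by []. Qed.
Lemma bc2E (a b : R[i]) : bc2 (BC a b) = b. Proof. by []. Qed.
Lemma conj_i : conjc ('i : R[i]) = - 'i.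
Proof. by apply/eqP; rewrite eq_complex /= !oppr0 !eqxx. Qed.

Lemma cM (x y : R[i]) : conjc (x * y) = conjc x * conjc y. Proof. exact: rmorphM. Qed.
Lemma cD (x y : R[i]) : conjc (x + y) = conjc x + conjc y. Proof. exact: rmorphD. Qed.
Lemma cB (x y : R[i]) : conjc (x - y) = conjc x - conjc y. Proof. exact: rmorphB. Qed.
Lemma cN (x : R[i]) : conjc (- x) = - conjc x. Proof. exact: rmorphN. Qed.
Lemma dec (w : bicomplex R) : bc_add (bc_mul (bc_e1 R) (bc_of (P1 w))) (bc_mul (bc_e2 R) (bc_of (P2 w))) = w.
Proof. case: w => a b; rewrite /bc_add /bc_mul /bc_e1 /bc_e2 /bc_of /P1 /P2 !bc1E !bc2E; congr BC; bring. Qed.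

Lemma conj3_add (a b : bicomplex R) : bc_conj3 (bc_add a b) = bc_add (bc_conj3 a) (bc_conj3 b).
Proof. case: a => a1 a2; case: b => b1 b2; rewrite /bc_conj3 /bc_add !bc1E !bc2E.
  by rewrite !cD opprD. Qed.

Lemma conj3_mul (a b : bicomplex R) : bc_conj3 (bc_mul a b) = bc_mul (bc_conj3 a) (bc_conj3 b).
Proof. case: a => a1 a2; case: b => b1 b2; rewrite /bc_conj3 /bc_mul !bc1E !bc2E.
  rewrite cB cD !cM; congr BC; ring. Qed.

Lemma conj_half : conjc ((2 : R[i])^-1) = 2^-1.
Proof. by rewrite conjc_inv conjc_nat. Qed.

Lemma conj_e1 : bc_conj3 (bc_e1 R) = bc_e1 R.
Proof. rewrite /bc_conj3 /bc_e1 bc1E bc2E; congr BC; rewrite !cM conj_half ?conj_i ?conjc1 //.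
  by rewrite mulNr opprK. Qed.
Lemma conj_e2 : bc_conj3 (bc_e2 R) = bc_e2 R.
Proof. rewrite /bc_conj3 /bc_e2 bc1E bc2E; congr BC; rewrite ?cN !cM conj_half ?conj_i ?conjc1 //.
  by rewrite mulNr !opprK. Qed.

Lemma alg (a b c d : bicomplex R) :
  bc_add (bc_mul (bc_e1 R) (bc_add (bc_mul (bc_e1 R) a) (bc_mul (bc_e2 R) b)))
         (bc_mul (bc_e2 R) (bc_add (bc_mul (bc_e1 R) c) (bc_mul (bc_e2 R) d)))
  = bc_add (bc_mul (bc_e1 R) a) (bc_mul (bc_e2 R) d).
Proof. case: a => a1 a2; case: b => b1 b2; case: c => c1 c2; case: d => d1 d2.
  rewrite /bc_add /bc_mul /bc_e1 /bc_e2 !bc1E !bc2E; congr BC; bring. Qed.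

Lemma P1_combo (s t : bicomplex R) : in_Ci1 s -> in_Ci1 t ->
  bc_of (P1 (bc_add (bc_mul (bc_e1 R) s) (bc_mul (bc_e2 R) t))) = s.
Proof. case: s => s1 s2; case: t => t1 t2; rewrite /in_Ci1 !bc2E => -> ->.
  rewrite /bc_of /P1 /bc_add /bc_mul /bc_e1 /bc_e2 !bc1E !bc2E; congr BC; bring. Qed.
Lemma P2_combo (s t : bicomplex R) : in_Ci1 s -> in_Ci1 t ->
  bc_of (P2 (bc_add (bc_mul (bc_e1 R) s) (bc_mul (bc_e2 R) t))) = t.
Proof. case: s => s1 s2; case: t => t1 t2; rewrite /in_Ci1 !bc2E => -> ->.
  rewrite /bc_of /P2 /bc_add /bc_mul /bc_e1 /bc_e2 !bc1E !bc2E; congr BC; bring. Qed.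
End S.

Theorem mainTheorem6 (R : realType) (n : nat)
    (sp : bmod R n -> bmod R n -> bicomplex R) :
  bicomplex_scalar_product sp -> hyperbolic_positive sp -> closed_on_V sp ->
  forall X Y : bmod R n,
    sp X Y = bc_add (bc_mul (bc_e1 R) (sp (ecomp true X) (ecomp true Y)))
                    (bc_mul (bc_e2 R) (sp (ecomp false X) (ecomp false Y)))
    /\ (forall k : bool,
          bc_of (Pk k (sp X Y)) = sp (ecomp k X) (ecomp k Y)
          /\ in_Ci1 (sp (ecomp k X) (ecomp k Y))).
Proof.
move=> [hadd hsc hconj _] _ hV X Y.
have spl_add : forall X1 X2 Z, sp (bmod_add X1 X2) Z = bc_add (sp X1 Z) (sp X2 Z).
  by move=> X1 X2 Z; rewrite [LHS]hconj hadd conj3_add -!hconj.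
have spl_sc : forall a X1 Z, sp (bmod_scale a X1) Z = bc_mul (bc_conj3 a) (sp X1 Z).
  by move=> a X1 Z; rewrite [LHS]hconj hsc conj3_mul -!hconj.
have decX : forall Z : bmod R n, Z = bmod_add (bmod_scale (bc_e1 R) (ecomp true Z))
                                     (bmod_scale (bc_e2 R) (ecomp false Z)).
  by move=> Z; apply: functional_extensionality => l; rewrite /bmod_add /bmod_scale /ecomp /= dec.
have inV : forall k (Z : bmod R n), in_V (ecomp k Z) by move=> k Z l; rewrite /in_Ci1.
have E : sp X Y = bc_add (bc_mul (bc_e1 R) (sp (ecomp true X) (ecomp true Y)))
                    (bc_mul (bc_e2 R) (sp (ecomp false X) (ecomp false Y))).
  have -> : sp X Y = sp (bmod_add (bmod_scale (bc_e1 R) (ecomp true X))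
                                     (bmod_scale (bc_e2 R) (ecomp false X)))
                        (bmod_add (bmod_scale (bc_e1 R) (ecomp true Y))
                                     (bmod_scale (bc_e2 R) (ecomp false Y))).
    by rewrite -decX -decX.
  by rewrite spl_add !spl_sc conj_e1 conj_e2 !hadd !hsc alg.
split=> //.
move=> k; split; last by apply: hV.
rewrite E; case: k => /=.
  by apply: P1_combo; apply: hV.
by apply: P2_combo; apply: hV.
Qed.
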